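(* Let $\mathbb{K}$ be a field, $R=\mathbb{K}\langle x,y\rangle/(xy-1)$, $I=\langle1-yx\rangle$. Let $\mathcal{C}$ be the category of weak splitting pairs and let $\Gamma$ be the quiver with vertices $u,v$, an arrow $e:v\to u$ and a loop $f$ at $v$. For a weak splitting pair $\pi=(M,\alpha)$ define the $\Gamma$-representation $\Xi(\pi)=(M_0,\operatorname{im}\alpha,\psi_e,\psi_f)$, and for a morphism $\varphi:(M,\alpha)\to(N,\beta)$ in $\mathcal{C}$ let $\Xi(\varphi)$ consist of the restrictions $\varphi|_{M_0}:M_0\to N_0$ and $\varphi|_{\operatorname{im}\alpha}:\operatorname{im}\alpha\to\operatorname{im}\beta$. Then $\Xi$ is a well-defined functor $\mathcal{C}\to\operatorname{Rep}(\Gamma)$, and after corestriction it is a functor $\Xi:\mathcal{C}\to\mathcal{D}$, where $\mathcal{D}$ is the full subcategory of $\operatorname{Rep}(\Gamma)$ of representations in which the map on the loop $f$ is invertible.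
   Context: A weak splitting pair is a pair $(M,\alpha)$ where $M$ is a left $R$-module and $\alpha:M/IM\to M$ is a $\mathbb{K}[x]$-linear splitting of the canonical projection $M\to M/IM$ (so $M=IM\oplus\operatorname{im}\alpha$ as $\mathbb{K}[x]$-modules). Morphisms $(M,\alpha)\to(N,\beta)$ in $\mathcal{C}$ are $R$-module homomorphisms $\varphi:M\to N$ with $\operatorname{im}(\varphi\circ\alpha)\subseteq\operatorname{im}\beta$. For an $R$-module $N$, $N_0=\{n\in N: xn=0\}$. For $m\in\operatorname{im}\alpha$ write $ym=m_1+m_2$ with $m_1\in IM$, $m_2\in\operatorname{im}\alpha$ (then $xm_1=0$); $\psi_e:\operatorname{im}\alpha\to M_0$ is $m\mapsto m_1$, and $\psi_f:\operatorname{im}\alpha\to\operatorname{im}\alpha$ is left multiplication by $x$. A representation of $\Gamma$ is a quadruple $(M_u,M_v,\psi_e:M_v\to M_u,\psi_f:M_v\to M_v)$ of vector spaces and linear maps; morphisms are pairs of linear maps commuting with $\psi_e,\psi_f$. *)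

(* Defs.v *)
From HB Require Import structures.
From mathcomp Require Import all_boot all_algebra.
Set Implicit Arguments. Unset Strict Implicit. Unset Printing Implicit Defensive.
Import GRing.Theory.
Local Open Scope ring_scope.

(* A left module over R = K<x,y>/(xy - 1): a K-vector space with K-linear
   actions of x and y satisfying x (y m) = m. *)
Record Rmod (K : fieldType) := RMod {
  Rcar :> lmodType K;
  Rx : {linear Rcar -> Rcar};
  Ry : {linear Rcar -> Rcar};
  Rxy : forall m, Rx (Ry m) = m }.

Arguments Rx {K} r : rename.
Arguments Ry {K} r : rename.

Definition Rsubmod (K : fieldType) (M : Rmod K) (S : M -> Prop) : Prop :=
  [/\ S 0, (forall a b, S a -> S b -> S (a + b)),
      (forall (k : K) a, S a -> S (k *: a)),
      (forall a, S a -> S (Rx M a)) & (forall a, S a -> S (Ry M a))].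

(* I M, for I the two-sided ideal generated by 1 - yx: the smallest
   R-submodule of M containing all (1 - yx) n. *)
Definition IM (K : fieldType) (M : Rmod K) (m : M) : Prop :=
  forall S : M -> Prop, Rsubmod S -> (forall n, S (n - Ry M (Rx M n))) -> S m.

Definition M0 (K : fieldType) (M : Rmod K) (m : M) : Prop := Rx M m = 0.

Definition Rhom (K : fieldType) (M N : Rmod K) (f : M -> N) : Prop :=
  [/\ (forall (k : K) a b, f (k *: a + b) = k *: f a + f b),
      (forall a, f (Rx M a) = Rx N (f a)) & (forall a, f (Ry M a) = Ry N (f a))].

(* The quotient M/IM (a K[x]-module) is
   modelled abstractly: a K-vector space wQ with an endomorphism wqx (action
   of x) and a surjective K-linear, x-equivariant map wp : M -> wQ whose
   kernel is exactly IM.  alpha : wQ -> M is a K[x]-linear splitting of wp. *)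
Record wsp (K : fieldType) := WSP {
  wM : Rmod K;
  wQ : lmodType K;
  wp : {linear wM -> wQ};
  wqx : {linear wQ -> wQ};
  wp_surj : forall q, exists m, wp m = q;
  wp_ker : forall m, wp m = 0 <-> IM m;
  wp_x : forall m, wp (Rx wM m) = wqx (wp m);
  walpha : {linear wQ -> wM};
  walpha_x : forall q, walpha (wqx q) = Rx wM (walpha q);
  walpha_split : forall q, wp (walpha q) = q }.

Definition imA (K : fieldType) (P : wsp K) (m : wM P) : Prop :=
  exists q, m = walpha P q.
Arguments imA {K} P m.

Definition wmor (K : fieldType) (P Q : wsp K) (phi : wM P -> wM Q) : Prop :=
  Rhom phi /\ (forall q, @imA K Q (phi (walpha P q))).

(* psi_e m = m_1, the IM-component of y m in M = IM (+) im alpha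
   (the im-alpha component being alpha (p (y m))). *)
Definition psi_e (K : fieldType) (P : wsp K) (m : wM P) : wM P :=
  Ry (wM P) m - walpha P (wp P (Ry (wM P) m)).

Definition psi_f (K : fieldType) (P : wsp K) (m : wM P) : wM P := Rx (wM P) m.
Arguments psi_e {K} P m.
Arguments psi_f {K} P m.

(* Main.v *)
Require Import Defs.
From mathcomp Require Import all_boot all_algebra.
Import GRing.Theory.
Local Open Scope ring_scope.

Lemma IM_sub (K : fieldType) (M : Rmod K) : Rsubmod (@IM K M).
Proof.
split.
- by move=> S [].
- by move=> a b Ha Hb S HS Hg; case: (HS) => _ HD _ _ _; apply: HD; [apply: Ha|apply: Hb].
- by move=> k a Ha S HS Hg; case: (HS) => _ _ HZ _ _; apply: HZ; apply: Ha.
- by move=> a Ha S HS Hg; case: (HS) => _ _ _ HX _; apply: HX; apply: Ha.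
- by move=> a Ha S HS Hg; case: (HS) => _ _ _ _ HY; apply: HY; apply: Ha.
Qed.

Lemma IM_gen (K : fieldType) (M : Rmod K) n : @IM K M (n - Ry M (Rx M n)).
Proof. by move=> S _ H. Qed.

Lemma uniq_e (K : fieldType) (P : wsp K) m m1 m2 :
  Ry (wM P) m = m1 + m2 -> IM m1 -> imA P m2 -> m1 = psi_e P m.
Proof.
move=> E H1 [q Hq]; subst m2; rewrite /psi_e E.
have p1 : wp P m1 = 0 by apply/wp_ker.
rewrite linearD /= p1 add0r walpha_split.
by rewrite addrK.
Qed.

Section H.
Variables (K : fieldType) (M N : Rmod K) (f : M -> N).
Hypothesis hf : Rhom f.
Lemma hD a b : f (a + b) = f a + f b.
Proof. by case: hf => H _ _; have := H 1 a b; rewrite !scale1r. Qed.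
Lemma h0 : f 0 = 0.
Proof. case: hf => H _ _; have := H (-1) 0 0; by rewrite scaler0 addr0 scaleN1r addNr. Qed.
Lemma hN a : f (- a) = - f a.
Proof.
case: hf => H _ _.
by have := H (-1) a 0; rewrite h0 !addr0 !scaleN1r.
Qed.
Lemma hB a b : f (a - b) = f a - f b.
Proof. by rewrite hD hN. Qed.
Lemma hIM m : IM m -> IM (f m).
Proof.
move=> Hm; apply: (Hm (fun a => IM (f a))).
- case: hf => HZ HX HY; have [I0 ID IZ IX IY] := (@IM_sub K N).
  split.
  + by rewrite h0.
  + by move=> a b Ha Hb; rewrite hD; apply: ID.
  + by move=> k a Ha; have := HZ k a 0; rewrite !addr0 h0 addr0 => ->; apply: IZ.
  + by move=> a Ha; rewrite HX; apply: IX.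
  + by move=> a Ha; rewrite HY; apply: IY.
- move=> n; case: hf => _ HX HY; rewrite hB HY HX; exact: IM_gen.
Qed.
End H.

Theorem theorem5 (K : fieldType) :
  (forall P : wsp K,
     (* the decomposition y m = m_1 + m_2 defining psi_e is well defined *)
     (forall m, imA P m ->
        IM (psi_e P m) /\ imA P (Ry (wM P) m - psi_e P m) /\
        (forall m1 m2, Ry (wM P) m = m1 + m2 -> IM m1 -> imA P m2 ->
           m1 = psi_e P m)) /\
     (* psi_e : im alpha -> M_0 *)
     (forall m, imA P m -> M0 (psi_e P m)) /\
     (* psi_f : im alpha -> im alpha *)
     (forall m, imA P m -> imA P (psi_f P m)) /\
     (* psi_f is invertible on im alpha, i.e. Xi(P) lies in D *)
     (exists g : wM P -> wM P, forall m, imA P m ->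
        [/\ imA P (g m), g (psi_f P m) = m & psi_f P (g m) = m])) /\
  (forall (P Q : wsp K) (phi : wM P -> wM Q), wmor phi ->
     (* Xi(phi) restricts: M_0 -> N_0 and im alpha -> im beta *)
     (forall m, M0 m -> M0 (phi m)) /\
     (forall m, imA P m -> imA Q (phi m)) /\
     (* Xi(phi) is a morphism of Gamma-representations *)
     (forall m, imA P m -> phi (psi_e P m) = psi_e Q (phi m)) /\
     (forall m, imA P m -> phi (psi_f P m) = psi_f Q (phi m))).
Proof.
split.
- move=> P; split; [|split; [|split]].
  + move=> m Hm; split; [|split].
    * apply/wp_ker; rewrite /psi_e raddfB /= walpha_split; exact: subrr.
    * by exists (wp P (Ry (wM P) m)); rewrite /psi_e opprB addrC subrK.
    * move=> m1 m2 E H1 H2. exact: (@uniq_e K P m m1 m2 E H1 H2).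
  + move=> m [q ->]; rewrite /M0 /psi_e raddfB /= Rxy -walpha_x -wp_x Rxy.
    by rewrite walpha_split subrr.
  + by move=> m [q ->]; exists (wqx P q); rewrite /psi_f walpha_x.
  + exists (fun m => walpha P (wp P (Ry (wM P) m))) => m [q ->]; split.
    * by eexists.
    * rewrite /psi_f.
      have : wp P (walpha P q - Ry (wM P) (Rx (wM P) (walpha P q))) = 0.
        by apply/wp_ker; apply: IM_gen.
      by rewrite raddfB /= => /eqP; rewrite subr_eq0 => /eqP <-; rewrite walpha_split.
    * by rewrite /psi_f -walpha_x -wp_x Rxy walpha_split.
- move=> P Q phi [hp ha]; split; [|split; [|split]].
  + by move=> m; rewrite /M0 => H; case: (hp) => _ HX _; rewrite -HX H (@h0 _ _ _ _ hp).
  + by move=> m [q ->]; apply: ha.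
  + move=> m Hm; apply: (@uniq_e K Q (phi m) _ (phi (walpha P (wp P (Ry (wM P) m))))).
    * by case: (hp) => _ _ HY; rewrite -HY /psi_e -(@hD _ _ _ _ hp) subrK.
    * apply: (@hIM _ _ _ _ hp); apply/wp_ker; rewrite /psi_e raddfB /= walpha_split; exact: subrr.
    * exact: ha.
  + by move=> m _; case: (hp) => _ HX _; rewrite /psi_f HX.
Qed.
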